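(* Consider the seven semantics Cog (cogent), CyCog (cyclically cogent), WAd (weakly admissible), WC (weakly complete), StrTen (strongly tenable), Ten (tenable), StaTen (statically tenable), and the directed graph on them with ''solid'' edges Cog$\to$CyCog, Cog$\to$WAd, Cog$\to$StrTen, StrTen$\to$Ten, Ten$\to$StaTen, and ''dashed'' edges StaTen$\to$WC, WAd$\to$WC. Then, restricted to finite argumentation frameworks: (i) For each solid edge $\sigma\to\tau$, every $\sigma$-extension of every finite AF is a $\tau$-extension; for each dashed edge $\sigma\to\tau$, every $\sigma$-extension of every finite AF is a subset of some $\tau$-extension. (Consequently these relations hold along directed paths, composing to inclusion-based refinement whenever a dashed edge is used.) (ii) For any ordered pair $(\sigma,\tau)$ of distinct semantics such that there is no directed path (using solid and dashed edges) from $\sigma$ to $\tau$, there exist a finite AF $\mathcal F$ and a set $A\in\sigma(\mathcal F)$ such that $A$ is not contained in any $\tau$-extension of $\mathcal F$. (iii) For any ordered pair $(\sigma,\tau)$ of distinct semantics such that there is no directed path from $\sigma$ to $\tau$ using only solid edges, there exist a finite AF $\mathcal F$ and a set $A\subseteq F$ with $A\in\sigma(\mathcal F)$ and $A\notin\tau(\mathcal F)$.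
   Context: An argumentation framework (AF) $\mathcal F=(F,\rightarrowtail)$ consists of a set $F$ of arguments and a binary attack relation $\rightarrowtail\subseteq F\times F$. An argument $a$ attacks a set $B$ if $a\rightarrowtail b$ for some $b\in B$. $A^+=\{x\in F:\exists a\in A,\ a\rightarrowtail x\}$. A set is conflict-free if none of its elements attacks one of its elements. For $A,B\subseteq F$, $A$ is as cogent as $B$, written $A\succeq B$, if $A$ is conflict-free and every $b\in B$ that attacks $A$ belongs to $A^+$. We write $B\succ A$ (and $A\prec B$) if $B\succeq A$ and not $A\succeq B$. A semantics $\sigma$ assigns to each AF a set $\sigma(\mathcal F)$ of subsets of $F$ (its $\sigma$-extensions). Cogent: $E$ is cogent if for every $D\subseteq F$, $D\succeq E$ implies $E\succeq D$. Cyclically cogent: $E$ is cyclically cogent if for every $D\subseteq F$ at least one holds: (1) $D\not\succeq E$; (2) $E\succeq D$; (3) there is a chain $D=D_1\prec D_2\prec\dots\prec D_n=E$. Weakly admissible (finite $F$): the $A$-reduct $\mathcal F^A$ is the restriction of $\mathcal F$ to $F\setminus(A\cup A^+)$; $A$ is weakly admissible if it is conflict-free and every $y\in F$ attacking $A$ belongs to no weakly admissible set of $\mathcal F^A$ (recursive definition). Weakly complete: a weakly complete labeling is a map $L:F\to\{\mathtt{in},\mathtt{out},\mathtt{undec}\}$ such that for every $a$: if $L(a)=\mathtt{in}$ then no attacker of $a$ is $\mathtt{in}$; if $L(a)=\mathtt{out}$ then some attacker of $a$ is $\mathtt{in}$; if $L(a)=\mathtt{undec}$ then some attacker of $a$ is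 $\mathtt{undec}$ and none is $\mathtt{in}$. A weakly complete extension is the set of $\mathtt{in}$-labeled arguments of such a labeling. Statically tenable: $A$ is statically tenable if for every finite conflict-free $B\subseteq F$ there is a conflict-free $C\supseteq A$ with $C\succeq B$. Strong tenability game: a strong tenability dispute is a finite sequence $(X_0,\dots,X_n)$ of subsets of $F$, even-indexed sets being moves of Pro and odd-indexed ones moves of Opp, such that (1) each $X_i$ is conflict-free; (2) $X_i\subseteq X_{i+2}$; (3) $X_1$ and each $X_{i+2}\setminus X_i$ are finite; (4) every Pro move $X_{2k}$ ($k\ge1$) satisfies $X_{2k}\succeq X_{2k-1}$; (5) every Opp move satisfies $X_{2k}\not\succeq X_{2k+1}$. Tenability game: same but with (4') $X_{i+1}\succeq X_i$ for all $i$ and (5') every Opp move satisfies $X_{2k+1}\succ X_{2k}$. Play starts with $X_0=A$; players alternately extend the dispute legally; a dispute with no legal extension is concluded and is won by the player who made the last move. A Pro strategy is winning if every concluded dispute from $X_0=A$ in which Pro follows it is won by Pro (infinite plays are Pro wins). $A$ is strongly tenable (resp. tenable) if Pro has a winning strategy in the strong tenability (resp. tenability) game from $X_0=A$. *)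

(* Defs.v *)
From mathcomp Require Import all_boot.
From Stdlib Require Import Relations.
Set Implicit Arguments. Unset Strict Implicit. Unset Printing Implicit Defensive.

Section AF.
Variable T : finType.
Variable att : rel T.   (* att a b  means  a attacks b *)

Definition attacks_set (a : T) (B : {set T}) : bool := [exists b in B, att a b].
Definition plus (A : {set T}) : {set T} := [set x | [exists a in A, att a x]].
Definition cf (A : {set T}) : bool := [forall a in A, forall b in A, ~~ att a b].
Definition cogent_as (A B : {set T}) : bool :=
  cf A && [forall b in B, attacks_set b A ==> (b \in plus A)].
Definition prec (A B : {set T}) : bool := cogent_as B A && ~~ cogent_as A B.

Definition cogent (E : {set T}) : Prop :=
  forall D : {set T}, cogent_as D E -> cogent_as E D.

Definition cyc_cogent (E : {set T}) : Prop :=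
  forall D : {set T},
    ~~ cogent_as D E \/ cogent_as E D \/
    exists s : seq {set T}, path prec D s /\ last D s = E.

(* U is the current (sub)framework (the restriction of
   att to U); reduct U A = U \ (A ∪ A^+).  The fuel n is >= #|U| in all
   recursive calls reached from wadm (A nonempty strictly shrinks U; if A is
   empty there is no attacker so the recursion is not consulted). *)
Definition reduct (U A : {set T}) : {set T} := U :\: (A :|: plus A).
Fixpoint wadm_f (n : nat) (U A : {set T}) : bool :=
  [&& A \subset U, cf A &
   [forall y in U, attacks_set y A ==>
      match n with
      | 0 => false
      | n'.+1 => [forall B : {set T}, (y \in B) ==> ~~ wadm_f n' (reduct U A) B]
      end]].
Definition wadm (A : {set T}) : bool := wadm_f #|T| setT A.

Inductive label := LIn | LOut | LUndec.
Definition wc_labeling (L : T -> label) : Prop :=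
  forall a : T,
    (L a = LIn -> forall b, att b a -> L b <> LIn) /\
    (L a = LOut -> exists b, att b a /\ L b = LIn) /\
    (L a = LUndec -> (exists b, att b a /\ L b = LUndec) /\
                     (forall b, att b a -> L b <> LIn)).
Definition wcomplete (A : {set T}) : Prop :=
  exists L : T -> label, wc_labeling L /\ forall a, a \in A <-> L a = LIn.

(* Statically tenable (all subsets are finite here) *)
Definition stat_tenable (A : {set T}) : Prop :=
  forall B : {set T}, cf B ->
    exists C : {set T}, A \subset C /\ cf C /\ cogent_as C B.

(* Games.  A dispute is a nonempty seq [:: X_0; ...; X_n]; index i is a Pro
   move iff i is even.  pro_ok prev cur constrains Pro moves X_{2k} (k>=1),
   opp_ok prev cur constrains Opp moves X_{2k+1}. *)
Definition dispute (pro_ok opp_ok : rel {set T}) (A : {set T}) (d : seq {set T}) : Prop :=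
  0 < size d /\ nth set0 d 0 = A /\
  (forall i, i < size d -> cf (nth set0 d i)) /\
  (forall i, i.+2 < size d -> nth set0 d i \subset nth set0 d i.+2) /\
  (forall i, i.+1 < size d ->
     if odd i.+1 then opp_ok (nth set0 d i) (nth set0 d i.+1)
     else pro_ok (nth set0 d i) (nth set0 d i.+1)).

Definition follows (st : seq {set T} -> {set T}) (d : seq {set T}) : Prop :=
  forall i, 0 < i < size d -> ~~ odd i -> nth set0 d i = st (take i d).

(* st is winning: whenever it is Pro's turn (last move by Opp) in a dispute
   following st, st's answer is a legal extension.  Hence no concluded dispute
   following st is won by Opp (infinite plays count as Pro wins). *)
Definition winning (pro_ok opp_ok : rel {set T}) (A : {set T})
    (st : seq {set T} -> {set T}) : Prop :=
  forall d, dispute pro_ok opp_ok A d -> follows st d -> ~~ odd (size d) ->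
    dispute pro_ok opp_ok A (rcons d (st d)).

Definition str_pro : rel {set T} := fun prev cur => cogent_as cur prev.
Definition str_opp : rel {set T} := fun prev cur => ~~ cogent_as prev cur.
Definition ten_pro : rel {set T} := fun prev cur => cogent_as cur prev.
Definition ten_opp : rel {set T} := fun prev cur => cogent_as cur prev && ~~ cogent_as prev cur.

(* The initial position (A) must itself be a legal dispute, i.e. A conflict-free *)
Definition str_tenable (A : {set T}) : Prop :=
  dispute str_pro str_opp A [:: A] /\ exists st, winning str_pro str_opp A st.
Definition tenable (A : {set T}) : Prop :=
  dispute ten_pro ten_opp A [:: A] /\ exists st, winning ten_pro ten_opp A st.

End AF.

Definition semantics := forall T : finType, rel T -> {set T} -> Prop.
Inductive sem7 := Cog | CyCog | WAd | WC | StrTen | Ten | StaTen.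

Definition interp (s : sem7) : semantics :=
  match s with
  | Cog => fun T att A => @cogent T att A
  | CyCog => fun T att A => @cyc_cogent T att A
  | WAd => fun T att A => @wadm T att A = true
  | WC => fun T att A => @wcomplete T att A
  | StrTen => fun T att A => @str_tenable T att A
  | Ten => fun T att A => @tenable T att A
  | StaTen => fun T att A => @stat_tenable T att A
  end.

Definition solid (s t : sem7) : Prop :=
  (s = Cog /\ t = CyCog) \/ (s = Cog /\ t = WAd) \/ (s = Cog /\ t = StrTen) \/
  (s = StrTen /\ t = Ten) \/ (s = Ten /\ t = StaTen).
Definition dashed (s t : sem7) : Prop :=
  (s = StaTen /\ t = WC) \/ (s = WAd /\ t = WC).
Definition edge (s t : sem7) : Prop := solid s t \/ dashed s t.
Arguments interp : clear implicits.

(* Main.v *)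
From HB Require Import structures.
Require Import Defs.
From mathcomp Require Import all_boot zify.
From Stdlib Require Import Relations.
Set Implicit Arguments. Unset Strict Implicit. Unset Printing Implicit Defensive.


Section Gen.
Variables (T : finType) (att : rel T).
Implicit Types A B C D E G U : {set T}.

Lemma in_plus A x : (x \in plus att A) = [exists a in A, att a x].
Proof. by rewrite inE. Qed.

Lemma cfP A : reflect (forall a b, a \in A -> b \in A -> ~~ att a b) (cf att A).
Proof.
apply: (iffP forallP) => [H a b Ha Hb | H a].
  by move/implyP: (H a) => /(_ Ha) /forallP /(_ b) /implyP; apply.
by apply/implyP => Ha; apply/forallP => b; apply/implyP => Hb; apply: H.
Qed.

Lemma cogP A B : reflect (cf att A /\ forall b a, b \in B -> a \in A -> att b a -> b \in plus att A)
  (cogent_as att A B).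
Proof.
apply: (iffP andP) => [[cA /forallP H] | [cA H]]; split => //.
  move=> b a Hb Ha Hba; move/implyP: (H b) => /(_ Hb) /implyP; apply.
  by apply/existsP; exists a; rewrite Ha.
apply/forallP => b; apply/implyP => Hb; apply/implyP => /existsP [a /andP [Ha Hba]].
exact: H Hba.
Qed.

Lemma cf_sub A B : A \subset B -> cf att B -> cf att A.
Proof.
move=> sAB /cfP H; apply/cfP => a b Ha Hb; apply: H; exact: (subsetP sAB).
Qed.

Lemma plusS A B : A \subset B -> plus att A \subset plus att B.
Proof.
move=> sAB; apply/subsetP => x; rewrite !in_plus => /existsP [a /andP [Ha H]].
by apply/existsP; exists a; rewrite H (subsetP sAB).
Qed.

Lemma plusU A B : plus att (A :|: B) = plus att A :|: plus att B.
Proof.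
apply/setP => x; rewrite in_setU !in_plus; apply/existsP/orP.
  by case=> a /andP [/setUP [] Ha H]; [left | right]; apply/existsP; exists a; rewrite Ha.
by case=> /existsP [a /andP [Ha H]]; exists a; rewrite inE Ha ?orbT.
Qed.

Lemma cf_plus A x : cf att A -> x \in A -> x \in plus att A -> False.
Proof.
move=> /cfP H Hx; rewrite in_plus => /existsP [a /andP [Ha Hax]].
by move: (H a x Ha Hx); rewrite Hax.
Qed.

Lemma cogent_char E : cogent att E <->
  (cf att E /\ forall y a, a \in E -> att y a -> ~~ att y y -> y \in plus att E).
Proof.
split.
  move=> H.
  have cE : cf att E.
    have : cogent_as att set0 E.
      apply/cogP; split; first by apply/cfP => a b; rewrite inE.
      by move=> b a _; rewrite inE.
    by move/H/cogP => [].
  split => // y a Ha Hya Hyy.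
  case Hy: (y \in plus att E) => //.
  have : cogent_as att [set y] E.
    apply/cogP; split; first by apply/cfP => u v; rewrite !inE => /eqP -> /eqP ->.
    move=> b u Hb; rewrite inE => /eqP -> Hby; rewrite in_plus.
    by move/negbT: Hy; rewrite in_plus => /existsP []; exists b; rewrite Hb.
  by move/H/cogP => [_ /(_ y a)]; rewrite inE eqxx Hy; move/(_ isT Ha Hya).
move=> [cE H] D /cogP [cD _]; apply/cogP; split => // b a Hb Ha Hba.
apply: (H b a Ha Hba); move/cfP: cD => /(_ b b Hb Hb); done.
Qed.

Lemma cogent_cf E : cogent att E -> cf att E.
Proof. by case/cogent_char. Qed.

Lemma cogent_all E D : cogent att E -> cf att D -> cogent_as att E D.
Proof.
case/cogent_char => cE H cD; apply/cogP; split => // b a Hb Ha Hba.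
apply: (H b a Ha Hba); move/cfP: cD => /(_ b b Hb Hb); done.
Qed.

Lemma wadm_fE n U A : wadm_f att n U A =
  [&& A \subset U, cf att A &
   [forall y in U, attacks_set att y A ==>
      match n with
      | 0 => false
      | n'.+1 => [forall B : {set T}, (y \in B) ==> ~~ wadm_f att n' (reduct att U A) B]
      end]].
Proof. by case: n. Qed.

Lemma cog_wadm E : cogent att E -> wadm att E.
Proof.
case/cogent_char => cE H; rewrite /wadm wadm_fE subsetT cE /=.
apply/forallP => y; apply/implyP => _; apply/implyP => /existsP [a /andP [Ha Hya]].
have : 0 < #|T| by apply/card_gt0P; exists y.
case: #|T| => // n _; apply/forallP => B; apply/implyP => HyB.
rewrite wadm_fE negb_and; case Hyy: (att y y).
  apply/orP; right; rewrite negb_and; apply/orP; left; apply/negP => /cfP /(_ y y HyB HyB).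
  by rewrite Hyy.
have := H y a Ha Hya (negbT Hyy) => Hp.
apply/orP; left; apply/negP => /subsetP /(_ y HyB); rewrite /reduct in_setD in_setU Hp.
by rewrite orbT.
Qed.

Lemma cog_cyc E : cogent att E -> cyc_cogent att E.
Proof.
move=> H D; case HD: (cogent_as att D E); last by left.
by right; left; apply: H.
Qed.

End Gen.


Section Games.
Variables (T : finType) (att : rel T).
Implicit Types A B C D E G U P O : {set T}.
Implicit Types (po oo : rel {set T}) (d : seq {set T}).

Lemma dispute_rcons po oo A d x :
  dispute att po oo A d -> cf att x ->
  (1 < size d -> nth set0 d (size d - 2) \subset x) ->
  (if odd (size d) then oo (nth set0 d (size d).-1) x else po (nth set0 d (size d).-1) x) ->
  dispute att po oo A (rcons d x).
Proof.
case=> [Hs [H0 [Hcf [Hsub Hrel]]]] cx Hsx Hr; split; first by rewrite size_rcons.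
split; first by rewrite nth_rcons Hs.
split.
  move=> i; rewrite size_rcons ltnS => Hi; rewrite nth_rcons.
  have [Hlt | Hgt | Heq] := ltngtP i (size d).
  - exact: Hcf.
  - by rewrite ltnNge Hi in Hgt.
  - by [].
split.
  move=> i; rewrite size_rcons ltnS => Hi; rewrite !nth_rcons.
  have [Hlt | Hgt | Heq] := ltngtP i.+2 (size d).
  - rewrite (ltn_trans (ltnSn _) (ltn_trans (ltnSn _) Hlt)); exact: Hsub.
  - by rewrite ltnNge Hi in Hgt.
  - rewrite (_ : i < size d); last by rewrite -Heq leqnSn.
    have -> : i = size d - 2 by rewrite -Heq subn2.
    by apply: Hsx; rewrite -Heq.
move=> i; rewrite size_rcons ltnS => Hi; rewrite !nth_rcons.
have [Hlt | Hgt | Heq] := ltngtP i.+1 (size d).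
- exact: Hrel.
- by rewrite ltnNge Hi in Hgt.
- by move: Hr; rewrite -Heq.
Qed.

Lemma dispute_last po oo A d x :
  dispute att po oo A (rcons d x) -> 0 < size d ->
  [/\ cf att x, (1 < size d -> nth set0 d (size d - 2) \subset x) &
      (if odd (size d) then oo (nth set0 d (size d).-1) x else po (nth set0 d (size d).-1) x)].
Proof.
case=> [Hs [H0 [Hcf [Hsub Hrel]]]] Hd; split.
- by have := Hcf (size d); rewrite size_rcons ltnSn nth_rcons ltnn eqxx; apply.
- move=> H1; have E : (size d - 2).+2 = size d by lia.
  have := Hsub (size d - 2); rewrite E size_rcons ltnSn => /(_ isT).
  by rewrite !nth_rcons ltnn eqxx (_ : size d - 2 < size d) //; lia.
- have E : ((size d).-1).+1 = size d by lia.
  have := Hrel (size d).-1; rewrite E size_rcons ltnSn => /(_ isT).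
  by rewrite !nth_rcons ltnn eqxx (_ : (size d).-1 < size d) //; lia.
Qed.

Lemma follows_rcons st d x :
  follows st d -> (~~ odd (size d) -> 0 < size d -> x = st d) -> follows st (rcons d x).
Proof.
move=> Hf Hx i; rewrite size_rcons ltnS => /andP [Hi]; rewrite leq_eqVlt => /orP [/eqP Ei | Hlt] Hodd.
  rewrite Ei nth_rcons ltnn eqxx -cats1 takel_cat // take_size; apply: Hx; rewrite -Ei //.
rewrite nth_rcons Hlt -cats1 takel_cat ?(ltnW Hlt) //; apply: Hf => //; by rewrite Hi Hlt.
Qed.

Fixpoint OW po oo (k : nat) P Op : Prop :=
  match k with
  | 0 => False
  | k'.+1 => exists O, [/\ cf att O, Op \subset O, oo P O &
        forall P', cf att P' -> P \subset P' -> po O P' -> OW po oo k' P' O]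
  end.

Lemma OW_lose po oo A k st : cf att A -> OW po oo k A set0 -> ~ winning att po oo A st.
Proof.
move=> cA HOW Hw.
suff : forall k d Op, dispute att po oo A d -> follows st d -> odd (size d) ->
   (1 < size d -> nth set0 d (size d - 2) = Op) ->
   OW po oo k (nth set0 d (size d).-1) Op -> False.
  move/(_ k [:: A] set0); apply => //.
    by split => //; split => //; split; [case | split; case].
  by move=> [|[|i]] //= /andP [].
elim=> [|k' IH] d Op Hd Hf Ho Hp //= [O [cO sO oO HP]].
have Hs : 0 < size d by case: Hd.
have Hd1 : dispute att po oo A (rcons d O).
  apply: dispute_rcons => //; first by move=> /Hp ->.
  by rewrite Ho.
have Hf1 : follows st (rcons d O) by apply: follows_rcons => //; rewrite Ho.
have := Hw _ Hd1 Hf1; rewrite size_rcons /= Ho /= => /(_ isT) Hd2.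
have Hs1 : 0 < size (rcons d O) by rewrite size_rcons.
have [cP sP rP] := dispute_last Hd2 Hs1.
move: sP rP; rewrite size_rcons /= Ho /= => sP rP.
have e1 : (size d).+1 - 2 = (size d).-1 by lia.
have Hlt : (size d).-1 < size d by lia.
have Hs2 : 1 < (size d).+1 by lia.
move: (sP Hs2); rewrite e1 nth_rcons Hlt => {}sP.
move: rP; rewrite nth_rcons ltnn eqxx => {}rP.
apply: (IH (rcons (rcons d O) (st (rcons d O))) O) => //.
- by apply: follows_rcons.
- by rewrite !size_rcons /= Ho.
- move=> _; rewrite !size_rcons subSS subSS subn0 nth_rcons size_rcons ltnSn.
  by rewrite nth_rcons ltnn eqxx.
- rewrite !size_rcons /= nth_rcons size_rcons ltnn eqxx; exact: HP.
Qed.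


Section InvWin.
Variables (po oo : rel {set T}) (A : {set T}) (inv : rel {set T}).
Hypothesis cA : cf att A.
Hypothesis inv0 : inv A set0.
Hypothesis invS : forall P Op O, inv P Op -> cf att O -> Op \subset O -> oo P O ->
  exists P', [/\ cf att P', P \subset P', po O P' & inv P' O].

Definition stI (d : seq {set T}) : {set T} :=
  odflt set0 [pick P' | [&& cf att P', nth set0 d (size d - 2) \subset P',
     po (nth set0 d (size d).-1) P' & inv P' (nth set0 d (size d).-1)]].

Lemma stI_ok d P Op O : size d >= 2 -> nth set0 d (size d - 2) = P ->
  nth set0 d (size d).-1 = O -> inv P Op -> cf att O -> Op \subset O -> oo P O ->
  [/\ cf att (stI d), P \subset stI d, po O (stI d) & inv (stI d) O].
Proof.
move=> _ E1 E2 HI cO sO oO; have [P' [c1 s1 p1 i1]] := invS HI cO sO oO.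
rewrite /stI; case: pickP => [Q /and4P [] | /(_ P')]; rewrite E1 E2 //.
by rewrite c1 s1 p1 i1.
Qed.

Lemma stI_inv d : dispute att po oo A d -> follows stI d ->
  forall k, (2 * k) < size d -> inv (nth set0 d (2 * k)) (nth set0 (set0 :: d) (2 * k)).
Proof.
case=> [Hs [H0 [Hcf [Hsub Hrel]]]] Hf; elim=> [|k IH] Hk; first by rewrite muln0 H0.
have Hk' : 2 * k < size d by lia.
have E : 2 * k.+1 = (2 * k).+2 by lia.
rewrite E /=.
have Ht : 2 <= size (take (2 * k).+2 d) by rewrite size_takel; lia.
have H1 : 0 < (2 * k).+2 < size d by apply/andP; split; lia.
have H2 : ~~ odd (2 * k).+2 by rewrite /= negbK oddM.
rewrite (Hf _ H1 H2).
have e1 : nth set0 (take (2 * k).+2 d) (size (take (2 * k).+2 d) - 2) = nth set0 d (2 * k).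
  by rewrite size_takel; [rewrite subSS subSS subn0 nth_take | lia].
have e2 : nth set0 (take (2 * k).+2 d) (size (take (2 * k).+2 d)).-1 = nth set0 d (2 * k).+1.
  by rewrite size_takel; [rewrite /= nth_take | lia].
have c2 : cf att (nth set0 d (2 * k).+1) by apply: Hcf; lia.
have s2 : nth set0 (set0 :: d) (2 * k) \subset nth set0 d (2 * k).+1.
  have HS : forall j, j.+1 < size d -> nth set0 (set0 :: d) j \subset nth set0 d j.+1.
    by case=> [|j] Hj /=; [rewrite sub0set | apply: Hsub].
  by apply: HS; lia.
have o2 : oo (nth set0 d (2 * k)) (nth set0 d (2 * k).+1).
  by have := Hrel (2 * k); rewrite /= oddM /= => /(_ ltac:(lia)).
by have [] := stI_ok Ht e1 e2 (IH Hk') c2 s2 o2.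
Qed.

Lemma stI_win : winning att po oo A stI.
Proof.
move=> d Hd Hf Hev.
have [Hs [H0 [Hcf [Hsub Hrel]]]] := Hd.
have [k Hk] : exists k, size d = (2 * k).+2.
  exists ((size d)./2).-1; move: (odd_double_half (size d)).
  by rewrite (negbTE Hev) add0n -mul2n; lia.
have Hk2 : 2 * k < size d by lia.
have HI := stI_inv Hd Hf Hk2.
have e1 : nth set0 d (size d - 2) = nth set0 d (2 * k) by rewrite Hk subSS subSS subn0.
have e2 : nth set0 d (size d).-1 = nth set0 d (2 * k).+1 by rewrite Hk.
have c2 : cf att (nth set0 d (2 * k).+1) by apply: Hcf; lia.
have s2 : nth set0 (set0 :: d) (2 * k) \subset nth set0 d (2 * k).+1.
  have HS : forall j, j.+1 < size d -> nth set0 (set0 :: d) j \subset nth set0 d j.+1.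
    by case=> [|j] Hj /=; [rewrite sub0set | apply: Hsub].
  by apply: HS; lia.
have o2 : oo (nth set0 d (2 * k)) (nth set0 d (2 * k).+1).
  by have := Hrel (2 * k); rewrite /= oddM /= => /(_ ltac:(lia)).
have [c3 s3 p3 _] := stI_ok (ltac:(lia) : 2 <= size d) e1 e2 HI c2 s2 o2.
apply: dispute_rcons => //.
- by move=> _; rewrite e1.
- by rewrite e2 Hk /= negbK oddM.
Qed.
End InvWin.

End Games.


Section Impl.
Variables (T : finType) (att : rel T).
Implicit Types A B C D E G U P O : {set T}.
Implicit Types (po oo : rel {set T}) (d : seq {set T}).

Lemma dispute1 po oo A : cf att A -> dispute att po oo A [:: A].
Proof. by move=> cA; split => //; split => //; split; [case | split; case]. Qed.

Lemma dispute_cf0 po oo A d : dispute att po oo A d -> cf att A.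
Proof. by case=> [Hs [H0 [Hcf _]]]; rewrite -H0; apply: Hcf. Qed.

Lemma cog_strten E : cogent att E -> str_tenable att E.
Proof.
move=> HE; split; first by apply: dispute1; apply: cogent_cf.
exists (fun _ => set0) => d [Hs [H0 [Hcf [Hsub Hrel]]]] _ Hev.
have H2 : 1 < size d by move: Hs Hev; case: (size d) => [|[|]].
have := Hrel 0 H2; rewrite /= H0 /str_opp.
by rewrite (cogent_all HE (Hcf 1 H2)).
Qed.

Lemma dispute_mono po oo1 oo2 A d : (forall x y, oo1 x y -> oo2 x y) ->
  dispute att po oo1 A d -> dispute att po oo2 A d.
Proof.
move=> H [Hs [H0 [Hcf [Hsub Hrel]]]]; do 4 (split => //).
by move=> i Hi; have := Hrel i Hi; case: ifP => // _; apply: H.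
Qed.

Lemma strten_ten E : str_tenable att E -> tenable att E.
Proof.
case=> Hd0 [st Hw]; split; first by apply: dispute1; apply: dispute_cf0 Hd0.
exists st => d Hd Hf Hev.
have Hd' : dispute att (str_pro att) (str_opp att) E d.
  by apply: dispute_mono Hd => x y /andP [].
have Hs : 0 < size d by case: Hd.
have [c1 s1 r1] := dispute_last (Hw d Hd' Hf Hev) Hs.
apply: dispute_rcons => //; by rewrite (negbTE Hev) in r1 *.
Qed.

Lemma ten_stat E : tenable att E -> stat_tenable att E.
Proof.
case=> Hd0 [st Hw]; have cE := dispute_cf0 Hd0 => B cB.
pose B' := B :\: plus att E.
have cB' : cf att B' by apply: cf_sub cB; apply: subsetDl.
have HB : forall C, E \subset C -> cogent_as att C B' -> cogent_as att C B.
  move=> C sEC /cogP [cC H]; apply/cogP; split => // b a Hb Ha Hba.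
  case Hp : (b \in plus att E); first by apply: (subsetP (plusS att sEC)).
  by apply: (H b a) => //; rewrite inE Hp.
case: (boolP (cogent_as att E B')) => H.
  by exists E; split; [exact: subxx | split => //; exact: HB (subxx E) H].
pose d := [:: E; B'].
have Hd : dispute att (ten_pro att) (ten_opp att) E d.
  split => //; split => //; split; first by case=> [|[|]].
  split; first by case.
  case=> [|[|]] // _ /=; rewrite /ten_opp H andbT.
  apply/cogP; split => // e b He Hb Heb; exfalso.
  by move: Hb; rewrite inE => /andP [/negP []]; rewrite in_plus; apply/existsP; exists e; rewrite He.
have Hf : follows st d by case=> [|[|]].
have [c1 s1 r1] := dispute_last (Hw d Hd Hf isT) (isT : 0 < size d).
have sE : E \subset st d by apply: s1.
by exists (st d); split => //; split => //; apply: HB sE _; exact: r1.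
Qed.

Lemma wc_of B : cf att B ->
  (forall x, x \notin B -> x \notin plus att B -> (forall y, att y x -> y \in plus att B) -> False) ->
  wcomplete att B.
Proof.
move=> cB H.
exists (fun x => if x \in B then LIn else if x \in plus att B then LOut else LUndec).
split; last by move=> a; case: (a \in B); [|case: (_ \in _)].
move=> a; case Ha: (a \in B); [| case Hp: (a \in plus att B)]; (split; [|split]) => //.
- move=> _ b Hba; case Hb: (b \in B); last by case: (b \in plus att B).
  by move=> _; apply: (cf_plus cB Ha); rewrite in_plus; apply/existsP; exists b; rewrite Hb.
- move=> _; move: Hp; rewrite in_plus => /existsP [b /andP [Hb Hba]]; exists b; by rewrite Hb.
- move=> _; split.
    case: (boolP [exists y, att y a && (y \notin plus att B)]).
      move=> /existsP [y /andP [Hya Hy]]; exists y; split => //.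
      case: ifP => Hy'.
        by move: Hp; rewrite in_plus => /negbT/negP []; apply/existsP; exists y; rewrite Hy'.
      by rewrite (negbTE Hy).
    move=> Hn; exfalso; apply: (H a); rewrite ?Ha ?Hp // => y Hya.
    by apply: contraNT Hn => Hy; apply/existsP; exists y; rewrite Hya.
  move=> b Hba; case: ifP => // Hb.
  by move: Hp; rewrite in_plus => /negbT/negP []; apply/existsP; exists b; rewrite Hb.
by case: (b \in plus att B).
Qed.

Definition statb A := [forall D : {set T}, cf att D ==> [exists C : {set T}, [&& A \subset C, cf att C & cogent_as att C D]]].

Lemma statP A : reflect (stat_tenable att A) (statb A).
Proof.
apply: (iffP forallP) => [H D cD | H D].
  have := H D; rewrite cD /= => /existsP [C /and3P [? ? ?]]; by exists C.
apply/implyP => cD; have [C [? [? ?]]] := H D cD; apply/existsP; exists C; by apply/and3P.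
Qed.

Lemma stat_cf A : stat_tenable att A -> cf att A.
Proof.
move=> H; have c0 : cf att set0 by apply/cfP => a b; rewrite inE.
have [C [sAC [cC _]]] := H set0 c0.
exact: cf_sub cC.
Qed.

Lemma stat_wc E : stat_tenable att E -> exists B, wcomplete att B /\ E \subset B.
Proof.
move/statP => HE; have [B /maxsetP [HB Hmax] sEB] := maxset_exists HE.
exists B; split => //.
have cB := stat_cf (elimT (statP B) HB).
apply: wc_of => // x HxB HxP Hatt.
have Hxx : ~~ att x x by apply/negP => Hxx; move: (Hatt x Hxx); rewrite (negbTE HxP).
suff : statb (x |: B).
  by move/Hmax => /(_ (subsetUr _ _)) Hx; move: HxB; rewrite -Hx setU11.
apply/statP => D cD.
pose D' := x |: [set d in D | ~~ att d x && ~~ att x d].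
have cD' : cf att D'.
  apply/cfP => a b; rewrite !inE => /orP [/eqP -> | /and3P [Ha Hax Hxa]] /orP [/eqP -> | /and3P [Hb Hbx Hxb]] //.
  by move/cfP: cD; apply.
have [C [sBC [cC HC]]] := elimT (statP B) HB D' cD'.
have HxC : x \notin plus att C.
  apply/negP; rewrite in_plus => /existsP [c /andP [Hc Hcx]].
  move: (Hatt c Hcx); rewrite in_plus => /existsP [b /andP [Hb Hbc]].
  by move/cfP: cC => /(_ b c (subsetP sBC b Hb) Hc); rewrite Hbc.
have HxaC : forall c, c \in C -> ~~ att x c.
  move=> c Hc; apply/negP => Hxc; move/cogP: HC => [_ /(_ x c)].
  by rewrite !inE eqxx Hc /= => /(_ isT isT Hxc) Hp; move: HxC; rewrite in_plus Hp.
exists (x |: C); split; first by apply: setUS.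
split.
  apply/cfP => a b; rewrite !inE => /orP [/eqP -> | Ha] /orP [/eqP -> | Hb] //.
  - by apply: HxaC.
  - apply/negP => Hbx; move: HxC; rewrite in_plus => /negP []; apply/existsP; exists a; rewrite Ha.
    by [].
  - by move/cfP: cC; apply.
apply/cogP; split.
  apply/cfP => a b; rewrite !inE => /orP [/eqP -> | Ha] /orP [/eqP -> | Hb] //.
  - by apply: HxaC.
  - apply/negP => Hbx; move: HxC; rewrite in_plus => /negP []; apply/existsP; exists a; rewrite Ha.
    by [].
  - by move/cfP: cC; apply.
move=> b a Hb; rewrite in_setU1 => Ha Hba.
case Hbx : (att b x).
  move: (Hatt b Hbx); apply/subsetP; apply: plusS; apply: subset_trans sBC _; apply: subsetUr.
case Hxb : (att x b).
  by rewrite in_plus; apply/existsP; exists x; rewrite !inE eqxx.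
have HbD : b \in D' by rewrite !inE Hb Hbx Hxb orbT.
move: Ha => /orP [/eqP Ea | Ha]; first by rewrite Ea Hbx in Hba.
move/cogP: HC => [_ /(_ b a HbD Ha Hba)]; apply/subsetP; apply: plusS; apply: subsetUr.
Qed.

End Impl.


Section WadmWC.
Variables (T : finType) (att : rel T).
Implicit Types A B C D E G U P O : {set T}.

Definition admR U G := [&& G \subset U, cf att G &
   [forall y in U, [forall g in G, att y g ==> (y \in plus att G)]]].

Lemma admR_wadm n U G : admR U G -> (0 < n \/ forall y g, y \in U -> g \in G -> ~~ att y g) ->
  wadm_f att n U G.
Proof.
case/and3P => sG cG /forallP H Hn; rewrite wadm_fE sG cG /=.
apply/forallP => y; apply/implyP => Hy; apply/implyP => /existsP [g /andP [Hg Hyg]].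
move: (H y); rewrite Hy /= => /forallP /(_ g); rewrite Hg Hyg /= => Hp.
case: n Hn => [|n] Hn.
  by case: Hn => [// | Hno]; move: (Hno y g Hy Hg); rewrite Hyg.
apply/forallP => B; apply/implyP => HyB; rewrite wadm_fE; apply/negP => /and3P [sB _ _].
by move: (subsetP sB y HyB); rewrite /reduct in_setD in_setU Hp orbT.
Qed.

Lemma wadm_wc E : wadm att E -> exists B, wcomplete att B /\ E \subset B.
Proof.
rewrite /wadm wadm_fE => /and3P [_ cE /forallP HE].
pose R := reduct att setT E.
have H0 : admR R set0.
  apply/and3P; split; [by rewrite sub0set | by apply/cfP => a b; rewrite inE |].
  by apply/forallP => y; apply/implyP => _; apply/forallP => g; rewrite inE.
have [G /maxsetP [HG Hmax] _] := maxset_exists H0.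
have [sGR cG HGd] := and3P HG.
have HR : forall x, (x \in R) = (x \notin E) && (x \notin plus att E).
  by move=> x; rewrite /R /reduct !inE negb_or andbT.
have HnoGE : forall g a, g \in G -> a \in E -> ~~ att g a.
  move=> g a Hg Ha; apply/negP => Hga.
  move: (HE g); rewrite inE /= => /implyP; rewrite (_ : attacks_set att g E); last first.
    by apply/existsP; exists a; rewrite Ha.
  move=> /(_ isT).
  have HgR := subsetP sGR g Hg.
  have Hne : a != g by apply/negP => /eqP Eag; move: HgR; rewrite HR -Eag Ha.
  have Hcard : 1 < #|T|.
    by have := max_card [set a; g]; rewrite cards2 Hne.
  case: #|T| Hcard => [|n] // Hn /forallP /(_ G); rewrite Hg /= => /negP; apply.
  apply: admR_wadm => //; lia.
exists (E :|: G); split; last by apply: subsetUl.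
have cB : cf att (E :|: G).
  apply/cfP => a b; rewrite !inE => /orP [Ha | Ha] /orP [Hb | Hb].
  - by move/cfP: cE; apply.
  - apply/negP => Hab; move: (subsetP sGR b Hb); rewrite HR => /andP [_ /negP []].
    by rewrite in_plus; apply/existsP; exists a; rewrite Ha.
  - by apply: HnoGE.
  - by move/cfP: cG; apply.
apply: wc_of => // x Hx Hxp Hatt.
move: Hx Hxp; rewrite inE negb_or plusU inE negb_or => /andP [HxE HxG] /andP [HxpE HxpG].
have HxR : x \in R by rewrite HR HxE HxpE.
have Hxx : ~~ att x x by apply/negP => Hxx; move: (Hatt x Hxx); rewrite plusU inE (negbTE HxpE) (negbTE HxpG).
suff : admR R (x |: G) by move/Hmax => /(_ (subsetUr _ _)) Ex; move: HxG; rewrite -Ex setU11.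
apply/and3P; split.
- by rewrite subUset sub1set HxR sGR.
- apply/cfP => a b; rewrite !inE => /orP [/eqP -> | Ha] /orP [/eqP -> | Hb] //.
  + apply/negP => Hxb; move: (HGd); move/forallP => /(_ x); rewrite HxR /= => /forallP /(_ b).
    by rewrite Hb Hxb /= (negbTE HxpG).
  + apply/negP => Hax; move: HxpG; rewrite in_plus => /negP []; apply/existsP; exists a; rewrite Ha.
    by [].
  + by move/cfP: cG; apply.
- apply/forallP => y; apply/implyP => Hy; apply/forallP => g; apply/implyP; rewrite in_setU1.
  move=> /orP [/eqP -> | Hg]; apply/implyP => Hyg.
    move: (Hatt y Hyg); rewrite plusU inE => /orP [Hp | Hp].
      by move: Hy; rewrite HR Hp andbF.
    by apply: (subsetP (plusS att (subsetUr _ _))).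
  move: (HGd) => /forallP /(_ y); rewrite Hy /= => /forallP /(_ g); rewrite Hg Hyg /=.
  by apply: (subsetP (plusS att (subsetUr _ _))).
Qed.
End WadmWC.


Definition lcode (l : label) : option bool :=
  match l with LIn => Some true | LOut => Some false | LUndec => None end.
Definition ldecode (o : option bool) : label :=
  match o with Some true => LIn | Some false => LOut | None => LUndec end.
Lemma lcodeK : cancel lcode ldecode. Proof. by case. Qed.
HB.instance Definition _ := Equality.copy label (can_type lcodeK).

Fixpoint sublists {T} (s : seq T) : seq (seq T) :=
  if s is x :: s' then let r := sublists s' in r ++ map (cons x) r else [:: [::]].

Fixpoint alllabs (k : nat) : seq (seq label) :=
  if k is k'.+1 then [seq x :: r | x <- [:: LIn; LOut; LUndec], r <- alllabs k'] else [:: [::]].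

Lemma alllabs_mem (ls : seq label) : ls \in alllabs (size ls).
Proof.
elim: ls => [|x ls IH] //=.
by case: x; rewrite !mem_cat (map_f (cons _) IH) ?orbT.
Qed.

Section Lists.
Variables (T : finType) (att : rel T) (e : seq T).
Hypothesis He : forall x, x \in e.
Implicit Types (l m p o : seq T).

Definition SS := sublists e.
Definition canon (X : {set T}) := [seq x <- e | x \in X].

Lemma filter_sublists (q : pred T) s : filter q s \in sublists s.
Proof.
elim: s => [|x s IH] //=; rewrite mem_cat; case: (q x); last by rewrite IH.
by rewrite map_f ?orbT.
Qed.

Lemma canon_S X : canon X \in SS.
Proof. exact: filter_sublists. Qed.

Lemma canonK X : [set x in canon X] = X.
Proof. by apply/setP => x; rewrite inE mem_filter He andbT. Qed.

Lemma forall_setsE (Q : pred {set T}) : [forall B, Q B] = all (fun m => Q [set x in m]) SS.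
Proof.
apply/forallP/allP => [H m _ | H B]; first exact: H.
by rewrite -(canonK B); apply: H; apply: canon_S.
Qed.

Lemma forall_inE (q : pred T) u : [forall y in [set x in u], q y] = all q u.
Proof.
apply/forallP/allP => [H y Hy | H y]; first by have := H y; rewrite inE Hy.
by rewrite inE; apply/implyP; apply: H.
Qed.

Definition cfL l := all (fun a => all (fun b => ~~ att a b) l) l.
Definition attsL b l := has (att b) l.
Definition plusL l x := has (fun a => att a x) l.
Definition cogL l1 l2 := cfL l1 && all (fun b => attsL b l1 ==> plusL l1 b) l2.
Definition subL l1 l2 := all (fun x => x \in l2) l1.
Definition precL l1 l2 := cogL l2 l1 && ~~ cogL l1 l2.

Lemma cfE l : cf att [set x in l] = cfL l.
Proof.
apply/cfP/allP => [H a Ha | H a b].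
  by apply/allP => b Hb; apply: H; rewrite inE.
by rewrite !inE => Ha Hb; move/allP: (H a Ha); apply.
Qed.

Lemma plusE l x : (x \in plus att [set y in l]) = plusL l x.
Proof.
rewrite in_plus; apply/existsP/hasP => [[a /andP [Ha H]] | [a Ha H]]; exists a => //.
  by rewrite inE in Ha.
by rewrite inE Ha.
Qed.

Lemma attsE b l : attacks_set att b [set y in l] = attsL b l.
Proof.
apply/existsP/hasP => [[a /andP [Ha H]] | [a Ha H]]; exists a => //.
  by rewrite inE in Ha.
by rewrite inE Ha.
Qed.

Lemma cogE l1 l2 : cogent_as att [set x in l1] [set x in l2] = cogL l1 l2.
Proof.
rewrite /cogent_as /cogL cfE; congr (_ && _).
rewrite (forall_inE (fun b => attacks_set att b [set x in l1] ==> (b \in plus att [set x in l1]))).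
by apply: eq_all => b; rewrite attsE plusE.
Qed.

Lemma subE l1 l2 : ([set x in l1] \subset [set x in l2]) = subL l1 l2.
Proof.
apply/subsetP/allP => [H x Hx | H x]; first by have := H x; rewrite !inE; apply.
by rewrite !inE; apply: H.
Qed.

Lemma precE l1 l2 : prec att [set x in l1] [set x in l2] = precL l1 l2.
Proof. by rewrite /prec /precL !cogE. Qed.

Lemma sup_neg (Q : {set T} -> Prop) (a : seq T) (Qb : pred (seq T)) :
  (forall l, Qb l -> ~ Q [set x in l]) -> all (fun l => subL a l ==> Qb l) SS ->
  forall B : {set T}, [set x in a] \subset B -> ~ Q B.
Proof.
move=> HQ /allP Hall B; rewrite -(canonK B) subE => Hs.
apply: HQ; move/implyP: (Hall _ (canon_S B)); apply.
by [].
Qed.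

Definition cogentL l := all (fun m => cogL m l ==> cogL l m) SS.
Lemma cogentL_pos l : cogentL l -> cogent att [set x in l].
Proof.
move/allP => H D; rewrite -(canonK D) !cogE => HD.
by move/implyP: (H _ (canon_S D)); apply.
Qed.
Lemma cogentL_neg l : ~~ cogentL l -> ~ cogent att [set x in l].
Proof.
move=> /allPn [m _]; rewrite negb_imply => /andP [H1 H2] Hc.
by move: (Hc [set x in m]); rewrite !cogE H1 (negbTE H2) => /(_ isT).
Qed.

Definition statL l := all (fun b => cfL b ==> has (fun c => [&& subL l c, cfL c & cogL c b]) SS) SS.
Lemma statL_pos l : statL l -> stat_tenable att [set x in l].
Proof.
move/allP => H B; rewrite -(canonK B) cfE => cB.
move/implyP: (H _ (canon_S B)) => /(_ cB) /hasP [c _ /and3P [H1 H2 H3]].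
by exists [set x in c]; rewrite subE cfE cogE.
Qed.
Lemma statL_neg l : ~~ statL l -> ~ stat_tenable att [set x in l].
Proof.
move=> /allPn [b _]; rewrite negb_imply => /andP [cb /hasPn Hn] Hs.
have [C [s1 [c1 g1]]] := Hs [set x in b] (introT idP (etrans (cfE b) cb)).
move: s1 c1 g1; rewrite -(canonK C) subE cfE cogE => s1 c1 g1.
by move: (Hn _ (canon_S C)); rewrite s1 c1 g1.
Qed.

Definition redL u l := [seq x <- u | (x \notin l) && ~~ plusL l x].
Fixpoint wadmL (n : nat) (u l : seq T) : bool :=
  [&& subL l u, cfL l &
   all (fun y => attsL y l ==>
      match n with
      | 0 => false
      | n'.+1 => all (fun m => (y \in m) ==> ~~ wadmL n' (redL u l) m) SS
      end) u].

Lemma wadmE n u l : wadm_f att n [set x in u] [set x in l] = wadmL n u l.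
Proof.
elim: n u l => [|n IH] u l; rewrite wadm_fE subE cfE /=; congr [&& _, _ & _];
  rewrite (forall_inE (fun y => attacks_set att y [set x in l] ==> _)); apply: eq_all => y;
  rewrite attsE //.
have -> : reduct att [set x in u] [set x in l] = [set x in redL u l].
  by apply/setP => x; rewrite /reduct in_setD in_setU plusE !inE mem_filter negb_or.
congr (_ ==> _); apply/forallP/allP => [H m _ | H B].
  by have := H [set x in m]; rewrite IH inE.
by rewrite -(canonK B) IH inE; apply: H; apply: canon_S.
Qed.

Fixpoint wadmF (n : nat) (u l : seq T) : bool :=
  if subL l u then if cfL l then
   all (fun y => if attsL y l then
      match n with
      | 0 => false
      | n'.+1 => all (fun m => if y \in m then ~~ wadmF n' (redL u l) m else true) SS
      end else true) u
  else false else false.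

Lemma wadmFE n u l : wadmF n u l = wadmL n u l.
Proof.
elim: n u l => [|n IH] u l /=; case: (subL l u) => //; case: (cfL l) => //;
  apply: eq_all => y; case: (attsL y l) => //.
Qed.

Lemma wadm_list n l : #|T| = n -> wadm att [set x in l] = wadmF n e l.
Proof.
move=> Hn; rewrite /wadm Hn wadmFE -wadmE; congr wadm_f.
by apply/setP => x; rewrite !inE He.
Qed.

Definition Lf (ls : seq label) (x : T) := nth LUndec ls (index x e).
Definition wclab (ls : seq label) := all (fun a =>
  [&& (Lf ls a == LIn) ==> all (fun b => att b a ==> (Lf ls b != LIn)) e,
      (Lf ls a == LOut) ==> has (fun b => att b a && (Lf ls b == LIn)) e &
      (Lf ls a == LUndec) ==> has (fun b => att b a && (Lf ls b == LUndec)) e &&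
                              all (fun b => att b a ==> (Lf ls b != LIn)) e]) e.
Definition wcL (ls : seq label) l := wclab ls && all (fun a => (a \in l) == (Lf ls a == LIn)) e.

Lemma wcL_pos ls l : wcL ls l -> wcomplete att [set x in l].
Proof.
case/andP => /allP H1 /allP H2; exists (Lf ls); split.
  move=> a; have /and3P [h1 h2 h3] := H1 a (He a); split; [|split].
  - move=> Ha b Hba; move: h1; rewrite Ha eqxx /= => /allP /(_ b (He b)).
    by rewrite Hba /= => /eqP.
  - move=> Ha; move: h2; rewrite Ha eqxx /= => /hasP [b _ /andP [Hba /eqP Hb]].
    by exists b.
  - move=> Ha; move: h3; rewrite Ha eqxx /= => /andP [/hasP [b _ /andP [Hba /eqP Hb]] /allP Hall].
    split; first by exists b.
    by move=> c Hca; move: (Hall c (He c)); rewrite Hca /= => /eqP.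
by move=> a; rewrite inE (eqP (H2 a (He a))); split => /eqP.
Qed.

Lemma wc_neg l : ~~ has (fun ls => wcL ls l) (alllabs (size e)) -> ~ wcomplete att [set x in l].
Proof.
move=> /hasPn Hn [L [HL HA]].
have HLf : forall x, Lf (map L e) x = L x.
  by move=> x; rewrite /Lf (nth_map x) ?index_mem ?He // nth_index.
have := Hn (map L e); rewrite -(size_map L e) alllabs_mem => /(_ isT).
rewrite /wcL negb_and => /orP [] /negP []; last first.
  apply/allP => a _; rewrite HLf; apply/eqP.
  apply/idP/eqP => Ha; [by apply/(HA a); rewrite inE | by have := proj2 (HA a) Ha; rewrite inE].
apply/allP => a _; rewrite !HLf; have [h1 [h2 h3]] := HL a.
apply/and3P; split.
- apply/implyP => /eqP Ha; apply/allP => b _; apply/implyP => Hba; rewrite HLf.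
  by apply/eqP; apply: h1.
- apply/implyP => /eqP Ha; have [b [Hba Hb]] := h2 Ha; apply/hasP; exists b => //.
  by rewrite HLf Hba Hb.
- apply/implyP => /eqP Ha; have [[b [Hba Hb]] Hall] := h3 Ha; apply/andP; split.
    by apply/hasP; exists b => //; rewrite HLf Hba Hb.
  by apply/allP => c _; apply/implyP => Hca; rewrite HLf; apply/eqP; apply: Hall.
Qed.

End Lists.


Section CfLemmas.
Variables (T : finType) (att : rel T).
Implicit Types A B C D E G U P O : {set T}.

Lemma wadm_cf A : wadm att A -> cf att A.
Proof. by rewrite /wadm wadm_fE => /and3P []. Qed.

Lemma wc_cf A : wcomplete att A -> cf att A.
Proof.
case=> L [HL HA]; apply/cfP => a b Ha Hb; apply/negP => Hab.
by have [h1 _] := HL b; apply: (h1 (proj1 (HA b) Hb) a Hab); apply/HA.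
Qed.

Lemma cyc_cf A : cyc_cogent att A -> cf att A.
Proof.
have c0 : cf att set0 by apply/cfP => a b; rewrite inE.
move/(_ set0) => [| [/cogP [] //| [s [Hp Hl]]]].
  rewrite negb_and c0 /= => /forallP [] b; apply/implyP => _; apply/implyP => /existsP [a].
  by rewrite inE.
case/lastP: s Hp Hl => [|s y]; first by move=> _ <-.
rewrite rcons_path last_rcons => /andP [_ /andP [/cogP [] ]] + _ _ Ey; by rewrite Ey.
Qed.

Lemma strten_cf A : str_tenable att A -> cf att A.
Proof. by case=> /dispute_cf0. Qed.
Lemma ten_cf A : tenable att A -> cf att A.
Proof. by case=> /dispute_cf0. Qed.
End CfLemmas.

Section ListGames.
Variables (T : finType) (att : rel T) (e : seq T).
Hypothesis He : forall x, x \in e.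
Implicit Types (l m p o : seq T).

Local Notation SS := (SS e).
Local Notation cfL := (cfL att).
Local Notation cogL := (cogL att).
Local Notation precL := (precL att).

Lemma set_nil : [set x in ([::] : seq T)] = set0.
Proof. by apply/setP => x; rewrite !inE. Qed.

Fixpoint owL (pob oob : rel (seq T)) (cands : seq (seq T)) (k : nat) p op : bool :=
  match k with
  | 0 => false
  | k'.+1 => has (fun o => [&& cfL o, subL op o, oob p o &
        all (fun p' => [&& cfL p', subL p p' & pob o p'] ==> owL pob oob cands k' p' o) SS]) cands
  end.

Lemma owL_OW po oo pob oob
  (Hpo : forall x y, po [set z in x] [set z in y] = pob x y)
  (Hoo : forall x y, oo [set z in x] [set z in y] = oob x y) cands k p op :
  owL pob oob cands k p op -> OW att po oo k [set x in p] [set x in op].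
Proof.
elim: k p op => [|k IH] p op //= /hasP [o _ /and4P [c1 s1 o1 /allP H]].
exists [set x in o]; split; rewrite ?cfE ?subE ?Hoo //.
move=> P'; rewrite -(canonK He P') cfE subE Hpo => c2 s2 p2; apply: IH.
by move/implyP: (H _ (@canon_S _ e P')); apply; rewrite c2 s2 p2.
Qed.

Definition keyeq l1 l2 := all (fun x => (x \in l1) == (x \in l2)) e.
Lemma keyeqE l1 l2 : keyeq l1 l2 -> [set x in l1] = [set x in l2].
Proof. by move/allP => H; apply/setP => x; rewrite !inE; apply/eqP; apply: H. Qed.

Definition invOK (pob oob : rel (seq T)) (I : seq (seq T * seq T)) :=
  all (fun pr => all (fun o => [&& cfL o, subL pr.2 o & oob pr.1 o] ==>
     has (fun p' => [&& cfL p', subL pr.1 p', pob o p' &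
           has (fun pr' => keyeq pr'.1 p' && keyeq pr'.2 o) I]) SS) SS) I.

Lemma game_posL po oo pob oob
  (Hpo : forall x y, po [set z in x] [set z in y] = pob x y)
  (Hoo : forall x y, oo [set z in x] [set z in y] = oob x y) I a :
  cfL a -> has (fun pr => keyeq pr.1 a && keyeq pr.2 [::]) I -> invOK pob oob I ->
  exists st, winning att po oo [set x in a] st.
Proof.
move=> ca /hasP [pr0 Hpr0 /andP [k1 k2]] /allP HI.
pose inv (P Op : {set T}) := has (fun pr => (P == [set x in pr.1]) && (Op == [set x in pr.2])) I.
exists (stI att po inv); apply: stI_win; first by rewrite cfE.
  apply/hasP; exists pr0 => //; rewrite (keyeqE k1) -set_nil (keyeqE k2) !eqxx.
  by [].
move=> P Op O /hasP [pr Hpr /andP [/eqP EP /eqP EO]] cO sO oO.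
move/allP: (HI pr Hpr) => /(_ _ (@canon_S _ e O)).
rewrite -{1}(canonK He O) cfE in cO; rewrite cO.
move: sO oO; rewrite EP EO -{1 2}(canonK He O) subE Hoo => sO oO; rewrite sO oO /=.
move=> /hasP [p' _ /and4P [c1 s1 p1 /hasP [pr' Hpr' /andP [k3 k4]]]].
exists [set x in p']; split; rewrite ?cfE ?subE ?EP //.
  by rewrite -(canonK He O) Hpo.
apply/hasP; exists pr' => //; rewrite (keyeqE k3) (keyeqE k4) canonK // !eqxx.
by [].
Qed.

Definition stepR (R : seq (seq T)) :=
  R ++ [seq y <- SS | has (fun x => precL x y) R & y \notin R].
Definition closedR (R : seq (seq T)) := all (fun x => all (fun y => precL x y ==> (y \in R)) SS) R.
Definition cycnegL l := has (fun D => let R := iter (size SS) stepR [:: D] in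
   [&& cogL D l, ~~ cogL l D, filter (fun x => x \in D) e \in R,
       filter (fun x => x \in l) e \notin R & closedR R]) SS.


Definition cycnegF l := has (fun D => if cogL D l then if cogL l D then false else
   (let R := iter (size SS) stepR [:: D] in
   [&& filter (fun x => x \in D) e \in R, filter (fun x => x \in l) e \notin R & closedR R])
   else false) SS.
Lemma cycnegFE l : cycnegF l = cycnegL l.
Proof. by apply: eq_has => D; case: (cogL D l); case: (cogL l D). Qed.

Lemma canon_set l : canon e [set x in l] = filter (fun x => x \in l) e.
Proof. by apply: eq_filter => x; rewrite inE. Qed.

Lemma path_closed R s X : closedR R -> canon e X \in R -> path (prec att) X s ->
  canon e (last X s) \in R.
Proof.
move=> /allP HR; elim: s X => [|Y s IH] X //= HX /andP [HXY Hp]; apply: IH => //.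
have {}HXY : precL (canon e X) (canon e Y) by rewrite -precE !canonK.
by move/allP: (HR _ HX) => /(_ _ (@canon_S _ e Y)) /implyP; apply.
Qed.

Lemma cyc_negL l : ~~ cfL l || cycnegL l -> ~ cyc_cogent att [set x in l].
Proof.
move=> /orP [ncf Hc | /hasP [D _ /and5P [h1 h2 h3 h4 h5]] Hc].
  by move: (cyc_cf Hc); rewrite cfE (negbTE ncf).
move: (Hc [set x in D]); rewrite !cogE h1 (negbTE h2) /= => -[] // [] // [s [Hp Hl]].
have := path_closed h5 _ Hp; rewrite Hl !canon_set (negbTE h4) => H; exfalso; move: (H h3); done.
Qed.


Fixpoint owF (pob oob : rel (seq T)) (cands : seq (seq T)) (k : nat) p op : bool :=
  match k with
  | 0 => false
  | k'.+1 => has (fun o => if cfL o then if subL op o then if oob p o then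
        all (fun p' => if cfL p' then if subL p p' then if pob o p' then owF pob oob cands k' p' o
                       else true else true else true) SS
        else false else false else false) cands
  end.

Lemma owFE pob oob cands k p op : owF pob oob cands k p op = owL pob oob cands k p op.
Proof.
elim: k p op => [|k IH] p op //=; apply: eq_has => o.
case: (cfL o) => //; case: (subL op o) => //; case: (oob p o) => //=.
apply: eq_all => p'; case: (cfL p') => //; case: (subL p p') => //; case: (pob o p') => //=.
Qed.

Definition invF (pob oob : rel (seq T)) (I : seq (seq T * seq T)) :=
  all (fun pr => all (fun o => if cfL o then if subL pr.2 o then if oob pr.1 o then
     has (fun p' => if cfL p' then if subL pr.1 p' then if pob o p' then
           has (fun pr' => if keyeq pr'.1 p' then keyeq pr'.2 o else false) I else false else false else false) SS
     else true else true else true) SS) I.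

Lemma invFE pob oob I : invF pob oob I = invOK pob oob I.
Proof.
apply: eq_all => pr; apply: eq_all => o.
case: (cfL o) => //; case: (subL pr.2 o) => //; case: (oob pr.1 o) => //=.
Qed.

Definition pro_strL x y := cogL y x.
Definition opp_strL x y := ~~ cogL x y.
Definition opp_tenL x y := cogL y x && ~~ cogL x y.

Lemma pro_strE x y : str_pro att [set z in x] [set z in y] = pro_strL x y.
Proof. by rewrite /str_pro cogE. Qed.
Lemma pro_tenE x y : ten_pro att [set z in x] [set z in y] = pro_strL x y.
Proof. by rewrite /ten_pro cogE. Qed.
Lemma opp_strE x y : str_opp att [set z in x] [set z in y] = opp_strL x y.
Proof. by rewrite /str_opp cogE. Qed.
Lemma opp_tenE x y : ten_opp att [set z in x] [set z in y] = opp_tenL x y.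
Proof. by rewrite /ten_opp !cogE. Qed.

Lemma strten_negL cands k l :
  ~~ cfL l || owL pro_strL opp_strL cands k l [::] -> ~ str_tenable att [set x in l].
Proof.
move=> /orP [ncf H | Ho [H0 [st Hw]]].
  by move: (strten_cf H); rewrite cfE (negbTE ncf).
have HOW := owL_OW pro_strE opp_strE Ho; rewrite set_nil in HOW.
exact: (OW_lose (dispute_cf0 H0) HOW Hw).
Qed.

Lemma ten_negL cands k l :
  ~~ cfL l || owL pro_strL opp_tenL cands k l [::] -> ~ tenable att [set x in l].
Proof.
move=> /orP [ncf H | Ho [H0 [st Hw]]].
  by move: (ten_cf H); rewrite cfE (negbTE ncf).
have HOW := owL_OW pro_tenE opp_tenE Ho; rewrite set_nil in HOW.
exact: (OW_lose (dispute_cf0 H0) HOW Hw).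
Qed.

Lemma strten_posL I a : cfL a -> has (fun pr => keyeq pr.1 a && keyeq pr.2 [::]) I ->
  invOK pro_strL opp_strL I -> str_tenable att [set x in a].
Proof.
move=> ca H1 H2; split; first by apply: dispute1; rewrite cfE.
exact: (game_posL pro_strE opp_strE ca H1 H2).
Qed.

Lemma ten_posL I a : cfL a -> has (fun pr => keyeq pr.1 a && keyeq pr.2 [::]) I ->
  invOK pro_strL opp_tenL I -> tenable att [set x in a].
Proof.
move=> ca H1 H2; split; first by apply: dispute1; rewrite cfE.
exact: (game_posL pro_tenE opp_tenE ca H1 H2).
Qed.

End ListGames.


Definition mkL n (e : seq 'I_n) (ns : seq nat) := [seq x <- e | nat_of_ord x \in ns].
Definition mkA n (E : seq (nat * nat)) : rel 'I_n := fun x y => (nat_of_ord x, nat_of_ord y) \in E.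

Definition e1 : seq 'I_1 := [:: @Ordinal 1 0 isT].
Lemma He1 : forall x : 'I_1, x \in e1. Proof. by case=> [[|m]]. Qed.
Definition e3 : seq 'I_3 := [:: @Ordinal 3 0 isT; @Ordinal 3 1 isT; @Ordinal 3 2 isT].
Lemma He3 : forall x : 'I_3, x \in e3. Proof. by case=> [[|[|[|m]]] Hm]. Qed.
Definition e4 : seq 'I_4 := [:: @Ordinal 4 0 isT; @Ordinal 4 1 isT; @Ordinal 4 2 isT; @Ordinal 4 3 isT].
Lemma He4 : forall x : 'I_4, x \in e4. Proof. by case=> [[|[|[|[|m]]]] Hm]. Qed.
Definition e6 : seq 'I_6 := [:: @Ordinal 6 0 isT; @Ordinal 6 1 isT; @Ordinal 6 2 isT;
   @Ordinal 6 3 isT; @Ordinal 6 4 isT; @Ordinal 6 5 isT].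
Lemma He6 : forall x : 'I_6, x \in e6. Proof. by case=> [[|[|[|[|[|[|m]]]]]] Hm]. Qed.

Section Neg.
Variables (n : nat) (att : rel 'I_n) (e : seq 'I_n).
Hypothesis He : forall x, x \in e.

Lemma neg_cog a : all (fun l => if subL a l then ~~ cogentL att e l else true) (SS e) ->
  forall B : {set 'I_n}, [set x in a] \subset B -> ~ cogent att B.
Proof. by move=> H; apply: (sup_neg He _ H) => l; apply: cogentL_neg. Qed.

Lemma neg_stat a : all (fun l => if subL a l then ~~ statL att e l else true) (SS e) ->
  forall B : {set 'I_n}, [set x in a] \subset B -> ~ stat_tenable att B.
Proof. by move=> H; apply: (sup_neg He _ H) => l; apply: statL_neg. Qed.

Lemma neg_wc a : all (fun l => if subL a l then ~~ has (fun ls => wcL att e ls l) (alllabs (size e)) else true) (SS e) ->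
  forall B : {set 'I_n}, [set x in a] \subset B -> ~ wcomplete att B.
Proof. by move=> H; apply: (sup_neg He _ H) => l; apply: wc_neg. Qed.

Lemma neg_wadm a : all (fun l => if subL a l then ~~ wadmF att e n e l else true) (SS e) ->
  forall B : {set 'I_n}, [set x in a] \subset B -> ~ wadm att B.
Proof.
move=> H; apply: (sup_neg He _ H) => l Hl.
by rewrite (wadm_list att He l (card_ord n)) (negbTE Hl).
Qed.

Lemma neg_cyc a : all (fun l => if subL a l then (if cfL att l then cycnegF att e l else true) else true) (SS e) ->
  forall B : {set 'I_n}, [set x in a] \subset B -> ~ cyc_cogent att B.
Proof.
move=> H; apply: (sup_neg He _ H) => l; case: ifP => Hc H1; apply: (cyc_negL He).
  by rewrite cycnegFE in H1; rewrite H1 orbT.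
by rewrite Hc.
Qed.

Lemma neg_strten cands a :
  all (fun l => if subL a l then (if cfL att l then owF att e (pro_strL att) (opp_strL att) cands 2 l [::] else true) else true) (SS e) ->
  forall B : {set 'I_n}, [set x in a] \subset B -> ~ str_tenable att B.
Proof.
move=> H; apply: (sup_neg He _ H) => l; case: ifP => Hc H1; apply: (@strten_negL _ _ _ He cands 2 l).
  by rewrite owFE in H1; rewrite H1 orbT.
by rewrite Hc.
Qed.

Lemma neg_ten cands a :
  all (fun l => if subL a l then (if cfL att l then owF att e (pro_strL att) (opp_tenL att) cands 2 l [::] else true) else true) (SS e) ->
  forall B : {set 'I_n}, [set x in a] \subset B -> ~ tenable att B.
Proof.
move=> H; apply: (sup_neg He _ H) => l; case: ifP => Hc H1; apply: (@ten_negL _ _ _ He cands 2 l).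
  by rewrite owFE in H1; rewrite H1 orbT.
by rewrite Hc.
Qed.
End Neg.

Definition att0 : rel 'I_1 := mkA [::].
Lemma E0_cog : cogent att0 [set x in ([::] : seq 'I_1)].
Proof. by apply: (cogentL_pos He1); vm_compute. Qed.
Lemma E0_wc : ~ wcomplete att0 [set x in ([::] : seq 'I_1)].
Proof. by apply: (wc_neg He1); vm_compute. Qed.

Definition attC : rel 'I_3 := mkA [:: (0,1); (1,2); (2,0)].
Definition aC := mkL e3 [:: 0].
Lemma EC_cog : forall B : {set 'I_3}, [set x in aC] \subset B -> ~ cogent attC B.
Proof. by apply: (neg_cog He3); vm_compute. Qed.
Lemma EC_wadm : forall B : {set 'I_3}, [set x in aC] \subset B -> ~ wadm attC B.
Proof. by apply: (neg_wadm He3); vm_compute. Qed.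
Lemma EC_wc : forall B : {set 'I_3}, [set x in aC] \subset B -> ~ wcomplete attC B.
Proof. by apply: (neg_wc He3); vm_compute. Qed.
Lemma EC_stat : forall B : {set 'I_3}, [set x in aC] \subset B -> ~ stat_tenable attC B.
Proof. by apply: (neg_stat He3); vm_compute. Qed.

Definition attWC : rel 'I_3 := mkA [:: (0,2); (1,0); (1,1)].
Definition aWC := mkL e3 [:: 2].
Lemma EWC_wc : wcomplete attWC [set x in aWC].
Proof. by apply: (@wcL_pos _ _ _ He3 [:: LUndec; LUndec; LIn]); vm_compute. Qed.
Lemma EWC_cog : forall B : {set 'I_3}, [set x in aWC] \subset B -> ~ cogent attWC B.
Proof. by apply: (neg_cog He3); vm_compute. Qed.
Lemma EWC_cyc : forall B : {set 'I_3}, [set x in aWC] \subset B -> ~ cyc_cogent attWC B.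
Proof. by apply: (neg_cyc He3); vm_compute. Qed.
Lemma EWC_wadm : forall B : {set 'I_3}, [set x in aWC] \subset B -> ~ wadm attWC B.
Proof. by apply: (neg_wadm He3); vm_compute. Qed.
Lemma EWC_stat : forall B : {set 'I_3}, [set x in aWC] \subset B -> ~ stat_tenable attWC B.
Proof. by apply: (neg_stat He3); vm_compute. Qed.

Definition attW : rel 'I_4 := mkA [:: (0,1);(0,3);(1,2);(1,3);(2,0);(2,3)].
Definition aW := mkL e4 [:: 3].
Lemma EW_wadm : wadm attW [set x in aW].
Proof. by rewrite (wadm_list attW He4 aW (card_ord 4)); vm_compute. Qed.
Lemma EW_cog : forall B : {set 'I_4}, [set x in aW] \subset B -> ~ cogent attW B.
Proof. by apply: (neg_cog He4); vm_compute. Qed.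
Lemma EW_cyc : forall B : {set 'I_4}, [set x in aW] \subset B -> ~ cyc_cogent attW B.
Proof. by apply: (neg_cyc He4); vm_compute. Qed.
Lemma EW_stat : forall B : {set 'I_4}, [set x in aW] \subset B -> ~ stat_tenable attW B.
Proof. by apply: (neg_stat He4); vm_compute. Qed.

Definition attS : rel 'I_4 := mkA [:: (0,1);(0,2);(0,3);(1,2);(2,0)].
Definition aS := mkL e4 [:: 3].
Lemma ES_strten : str_tenable attS [set x in aS].
Proof.
apply: (@strten_posL _ _ _ He4 [:: (mkL e4 [:: 2; 3], mkL e4 [:: 0]); (mkL e4 [:: 3], [::])]);
  [by vm_compute | by vm_compute | by rewrite -invFE; vm_compute].
Qed.
Lemma ES_cog : forall B : {set 'I_4}, [set x in aS] \subset B -> ~ cogent attS B.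
Proof. by apply: (neg_cog He4); vm_compute. Qed.
Lemma ES_cyc : forall B : {set 'I_4}, [set x in aS] \subset B -> ~ cyc_cogent attS B.
Proof. by apply: (neg_cyc He4); vm_compute. Qed.
Lemma ES_wadm : forall B : {set 'I_4}, [set x in aS] \subset B -> ~ wadm attS B.
Proof. by apply: (neg_wadm He4); vm_compute. Qed.

Definition attST : rel 'I_6 := mkA [:: (0,1);(2,0);(3,0);(3,2);(3,5);(4,3);(5,2);(5,4)].
Definition aST := mkL e6 [:: 1].
Lemma EST_stat : stat_tenable attST [set x in aST].
Proof. by apply: (statL_pos He6); vm_compute. Qed.
Lemma EST_ten : forall B : {set 'I_6}, [set x in aST] \subset B -> ~ tenable attST B.
Proof.
apply: (neg_ten He6 (cands := [:: mkL e6 [:: 0]; mkL e6 [:: 0; 4]; mkL e6 [:: 0; 5];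
   mkL e6 [:: 5]; mkL e6 [:: 4]])).
by vm_compute.
Qed.

Definition attT : rel 'I_6 := mkA [:: (0,1);(0,2);(1,3);(2,4);(2,5);(4,3);(5,0);(5,1);(5,4)].
Definition aT := mkL e6 [:: 3].
Lemma ET_ten : tenable attT [set x in aT].
Proof.
apply: (@ten_posL _ _ _ He6 [:: (mkL e6 [:: 3; 5], mkL e6 [:: 0; 4]);
  (mkL e6 [:: 0; 3], mkL e6 [:: 1; 2]); (mkL e6 [:: 3; 5], mkL e6 [:: 4]);
  (mkL e6 [:: 0; 3], mkL e6 [:: 1]); (mkL e6 [:: 3], [::]); (mkL e6 [:: 3; 5], mkL e6 [:: 1; 4])]);
  [by vm_compute | by vm_compute | by rewrite -invFE; vm_compute].
Qed.
Lemma ET_strten : forall B : {set 'I_6}, [set x in aT] \subset B -> ~ str_tenable attT B.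
Proof.
apply: (neg_strten He6 (cands := [:: mkL e6 [:: 1]; mkL e6 [:: 1; 4]; mkL e6 [:: 1; 2];
   mkL e6 [:: 4]; mkL e6 [:: 0]; mkL e6 [:: 2]])).
by vm_compute.
Qed.


Lemma EC_cyc : cyc_cogent attC [set x in aC].
Proof.
have Hb : all (fun m => ~~ cogL attC m aC || cogL attC aC m ||
    keyeq e3 m [:: @Ordinal 3 2 isT]) (SS e3) by vm_compute.
move=> D; rewrite -(canonK He3 D).
move/allP: Hb => /(_ _ (@canon_S _ e3 D)) /orP [/orP [H | H] | H].
- by left; rewrite cogE.
- by right; left; rewrite cogE.
right; right; rewrite (keyeqE He3 H).
exists [:: [set x in [:: @Ordinal 3 1 isT]]; [set x in aC]]; split => //.
by rewrite /= !precE; vm_compute.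
Qed.


Definition edgeb (s t : sem7) : bool :=
  match s, t with
  | Cog, CyCog | Cog, WAd | Cog, StrTen | StrTen, Ten | Ten, StaTen | StaTen, WC | WAd, WC => true
  | _, _ => false end.
Definition solidb (s t : sem7) : bool :=
  match s, t with
  | Cog, CyCog | Cog, WAd | Cog, StrTen | StrTen, Ten | Ten, StaTen => true
  | _, _ => false end.

Lemma edgebP s t : edgeb s t -> edge s t.
Proof. by case: s; case: t => //= _; rewrite /edge /solid /dashed; intuition. Qed.
Lemma solidbP s t : solidb s t -> solid s t.
Proof. by case: s; case: t => //= _; rewrite /solid; intuition. Qed.

Ltac sp1 := apply: t_step; apply: edgebP; reflexivity.
Ltac via X := apply: (@t_trans sem7 edge _ X _); [sp1 |].
Ltac spath := first [ sp1
  | via Cog; spath | via CyCog; spath | via WAd; spath | via WC; spath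
  | via StrTen; spath | via Ten; spath | via StaTen; spath ].
Ltac ss1 := apply: t_step; apply: solidbP; reflexivity.
Ltac svia X := apply: (@t_trans sem7 solid _ X _); [ss1 |].
Ltac sspath := first [ ss1
  | svia Cog; sspath | svia CyCog; sspath | svia WAd; sspath | svia WC; sspath
  | svia StrTen; sspath | svia Ten; sspath | svia StaTen; sspath ].

Lemma test1 : clos_trans sem7 edge Cog StaTen.
Proof. spath. Qed.
Lemma test2 : clos_trans sem7 solid Cog StaTen.
Proof. sspath. Qed.

Lemma EC_neg t : t <> CyCog -> forall B : {set 'I_3}, [set x in aC] \subset B -> ~ interp t _ attC B.
Proof.
case: t => // _ B Hs /= HB.
- exact: (EC_cog Hs HB).
- exact: (EC_wadm Hs HB).
- exact: (EC_wc Hs HB).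
- exact: (EC_stat Hs (ten_stat (strten_ten HB))).
- exact: (EC_stat Hs (ten_stat HB)).
- exact: (EC_stat Hs HB).
Qed.

Lemma exC_old : exists (T : finType) (att : rel T) (A : {set T}), interp CyCog T att A /\
   forall t, t <> CyCog -> forall B, interp t T att B -> ~ A \subset B.
Proof.
exists _, attC, [set x in aC]; split; first exact: EC_cyc.
by move=> t Ht B HB Hs; exact: (EC_neg Ht Hs HB).
Qed.


Lemma EWC_neg t : t <> WC -> forall B : {set 'I_3}, [set x in aWC] \subset B -> ~ interp t _ attWC B.
Proof.
case: t => // _ B Hs /= Hb.
- exact: (EWC_cog Hs Hb).
- exact: (EWC_cyc Hs Hb).
- exact: (EWC_wadm Hs Hb).
- exact: (EWC_stat Hs (ten_stat (strten_ten Hb))).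
- exact: (EWC_stat Hs (ten_stat Hb)).
- exact: (EWC_stat Hs Hb).
Qed.

Lemma EW_neg t : match t with Cog | CyCog | StrTen | Ten | StaTen => True | _ => False end ->
  forall B : {set 'I_4}, [set x in aW] \subset B -> ~ interp t _ attW B.
Proof.
case: t => // _ B Hs /= Hb.
- exact: (EW_cog Hs Hb).
- exact: (EW_cyc Hs Hb).
- exact: (EW_stat Hs (ten_stat (strten_ten Hb))).
- exact: (EW_stat Hs (ten_stat Hb)).
- exact: (EW_stat Hs Hb).
Qed.

Lemma ES_neg t : match t with Cog | CyCog | WAd => True | _ => False end ->
  forall B : {set 'I_4}, [set x in aS] \subset B -> ~ interp t _ attS B.
Proof.
case: t => // _ B Hs /= Hb.
- exact: (ES_cog Hs Hb).
- exact: (ES_cyc Hs Hb).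
- exact: (ES_wadm Hs Hb).
Qed.

Lemma EST_neg t : match t with StrTen | Ten => True | _ => False end ->
  forall B : {set 'I_6}, [set x in aST] \subset B -> ~ interp t _ attST B.
Proof.
case: t => // _ B Hs /= Hb.
- exact: (EST_ten Hs (strten_ten Hb)).
- exact: (EST_ten Hs Hb).
Qed.

Definition cexb (s t : sem7) : bool :=
  match s, t with
  | CyCog, Cog | CyCog, WAd | CyCog, WC | CyCog, StrTen | CyCog, Ten | CyCog, StaTen => true
  | WC, Cog | WC, CyCog | WC, WAd | WC, StrTen | WC, Ten | WC, StaTen => true
  | WAd, Cog | WAd, CyCog | WAd, StrTen | WAd, Ten | WAd, StaTen => true
  | StrTen, Cog | StrTen, CyCog | StrTen, WAd => true
  | Ten, Cog | Ten, CyCog | Ten, WAd | Ten, StrTen => true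
  | StaTen, Cog | StaTen, CyCog | StaTen, WAd | StaTen, StrTen | StaTen, Ten => true
  | _, _ => false
  end.

Definition exP s t := exists (T : finType) (att : rel T) (A : {set T}),
  interp s T att A /\ forall B, interp t T att B -> ~ A \subset B.

Lemma exC t : t <> CyCog -> exP CyCog t.
Proof.
move=> Ht; exists _, attC, [set x in aC]; split; first exact: EC_cyc.
by move=> B Hb Hs; apply: (EC_neg Ht Hs Hb).
Qed.
Lemma exWC t : t <> WC -> exP WC t.
Proof.
move=> Ht; exists _, attWC, [set x in aWC]; split; first exact: EWC_wc.
by move=> B Hb Hs; apply: (EWC_neg Ht Hs Hb).
Qed.
Lemma exW t : match t with Cog | CyCog | StrTen | Ten | StaTen => True | _ => False end -> exP WAd t.
Proof.
move=> Ht; exists _, attW, [set x in aW]; split; first exact: EW_wadm.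
by move=> B Hb Hs; apply: (EW_neg Ht Hs Hb).
Qed.
Lemma exS s t : match s with StrTen | Ten | StaTen => True | _ => False end ->
  match t with Cog | CyCog | WAd => True | _ => False end -> exP s t.
Proof.
move=> Hs0 Ht; exists _, attS, [set x in aS]; split.
  case: s Hs0 => // _ /=; [exact: ES_strten | exact: (strten_ten ES_strten) |
                          exact: (ten_stat (strten_ten ES_strten))].
by move=> B Hb Hs; apply: (ES_neg Ht Hs Hb).
Qed.
Lemma exST t : match t with StrTen | Ten => True | _ => False end -> exP StaTen t.
Proof.
move=> Ht; exists _, attST, [set x in aST]; split; first exact: EST_stat.
by move=> B Hb Hs; apply: (EST_neg Ht Hs Hb).
Qed.
Lemma exT : exP Ten StrTen.
Proof.
exists _, attT, [set x in aT]; split; first exact: ET_ten.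
by move=> B Hb Hs; exact: (ET_strten Hs Hb).
Qed.

Lemma cex s t : cexb s t -> exP s t.
Proof.
case: s; case: t => //= _;
  first [ by apply: exC | by apply: exWC | by apply: exW | by apply: exT | by apply: exST
        | by apply: exS ].
Qed.

Lemma cex3 s t : cexb s t -> exists (T : finType) (att : rel T) (A : {set T}),
       interp s T att A /\ ~ interp t T att A.
Proof.
move/cex; rewrite /exP => -[T [att [A [HA Hb]]]].
by exists T, att, A; split => // H; exact: (Hb A H (subxx A)).
Qed.

Lemma E0_all s : match s with Cog | WAd | StrTen | Ten | StaTen => True | _ => False end ->
  interp s _ att0 [set x in ([::] : seq 'I_1)].
Proof.
case: s => // _ /=.
- exact: E0_cog.
- exact: (cog_wadm E0_cog).
- exact: (cog_strten E0_cog).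
- exact: (strten_ten (cog_strten E0_cog)).
- exact: (ten_stat (strten_ten (cog_strten E0_cog))).
Qed.

Theorem theorem9 :
  (* (i) *)
  ((forall s t : sem7, solid s t ->
      forall (T : finType) (att : rel T) (A : {set T}),
        interp s T att A -> interp t T att A) /\
   (forall s t : sem7, dashed s t ->
      forall (T : finType) (att : rel T) (A : {set T}),
        interp s T att A -> exists B : {set T}, interp t T att B /\ A \subset B)) /\
  (* (ii) *)
  (forall s t : sem7, s <> t -> ~ clos_trans sem7 edge s t ->
     exists (T : finType) (att : rel T) (A : {set T}),
       interp s T att A /\
       forall B : {set T}, interp t T att B -> ~ (A \subset B)) /\
  (* (iii) *)
  (forall s t : sem7, s <> t -> ~ clos_trans sem7 solid s t ->
     exists (T : finType) (att : rel T) (A : {set T}),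
       interp s T att A /\ ~ interp t T att A).
Proof.
split; [split | split].
- move=> s t [[-> ->]|[[-> ->]|[[-> ->]|[[-> ->]|[-> ->]]]]] T att A /=.
  + exact: cog_cyc.
  + exact: cog_wadm.
  + exact: cog_strten.
  + exact: strten_ten.
  + exact: ten_stat.
- move=> s t [[-> ->]|[-> ->]] T att A /=.
  + exact: stat_wc.
  + exact: wadm_wc.
- move=> s t Hst Hnp; case: s Hst Hnp; case: t => Hst Hnp;
    first [ by case: Hst | by exfalso; apply: Hnp; spath | by apply: cex ].
- move=> s t Hst Hnp; case: s Hst Hnp; case: t => Hst Hnp;
    first [ by case: Hst | by exfalso; apply: Hnp; sspath
          | by exists _, att0, [set x in ([::] : seq 'I_1)]; split; [apply: E0_all | exact: E0_wc]
          | by apply: cex3 ].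
Qed.
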